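(* Let $\mathcal{C}_1=\mathbb{C}\{e\}$ be the $2$-dimensional complex algebra with basis $1,e$ and $e^2=-1$. Let $A\in\mathcal{C}_1^{m\times n}$ be written as $A=A_0+A_1e$ with $A_0,A_1\in\mathbb{C}^{m\times n}$, and let $\overline{A}=A_0-A_1e$. For a positive integer $t$ define the $2t\times 2t$ matrices over $\mathcal{C}_1$ $$J_{2t}=\frac12\begin{pmatrix}(1-ie)I_t & -(i-e)I_t\\ -(i-e)I_t & (1-ie)I_t\end{pmatrix},\qquad J_{2t}'=\frac12\begin{pmatrix}(1-ie)I_t & (i-e)I_t\\ (i-e)I_t & (1-ie)I_t\end{pmatrix}.$$ Then $J_{2t}$ is invertible with $J_{2t}^{-1}=J_{2t}'$, and $$J_{2m}\begin{pmatrix}A&0\\0&\overline{A}\end{pmatrix}J_{2n}^{-1}=\begin{pmatrix}A_0+A_1i&0\\0&A_0-A_1i\end{pmatrix}.$$ In particular, if $m=n$ this is a similarity over $\mathcal{C}_1$.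
   Context: $i$ is the imaginary unit of $\mathbb{C}$, which commutes with $e$; $I_t$ is the $t\times t$ identity matrix. *)

(* Defs.v *)
From HB Require Import structures.
From mathcomp Require Import all_boot all_order all_algebra.
From mathcomp Require Import complex.
From mathcomp Require Import reals.
From mathcomp Require Import ring.
Set Implicit Arguments. Unset Strict Implicit. Unset Printing Implicit Defensive.
Import Order.TTheory GRing.Theory Num.Theory.
Local Open Scope ring_scope.

(* The algebra K{e} = K (+) K e with e^2 = -1, over a commutative ring K.
   An element (a, b) stands for a + b e. *)
Section Ce.
Variable K : comNzRingType.

Definition Ce : Type := (K * K)%type.
HB.instance Definition _ := Choice.on Ce.
HB.instance Definition _ := GRing.Zmodule.on Ce.

Definition Ce_one : Ce := (1, 0).
Definition Ce_mul (x y : Ce) : Ce :=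
  (x.1 * y.1 - x.2 * y.2, x.1 * y.2 + x.2 * y.1).

Lemma Ce_mulA : associative Ce_mul.
Proof. by move=> [a b] [c d] [f g]; rewrite /Ce_mul /=; congr (_, _); ring. Qed.
Lemma Ce_mulC : commutative Ce_mul.
Proof. by move=> [a b] [c d]; rewrite /Ce_mul /=; congr (_, _); ring. Qed.
Lemma Ce_mul1 : left_id Ce_one Ce_mul.
Proof. by move=> [a b]; rewrite /Ce_mul /=; congr (_, _); ring. Qed.
Lemma Ce_mulDl : left_distributive Ce_mul (@GRing.add Ce).
Proof.
move=> [a b] [c d] [f g]; rewrite /Ce_mul.
change ((a, b) + (c, d) : Ce) with ((a + c, b + d) : Ce).
change ((?x, ?y) + (?z, ?w) : Ce) with ((x + z, y + w) : Ce).
by rewrite /=; congr (_, _); ring.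
Qed.
Lemma Ce_one_neq0 : Ce_one != 0.
Proof. by apply/negP => /eqP [] /eqP; rewrite oner_eq0. Qed.

HB.instance Definition _ := GRing.Zmodule_isComNzRing.Build Ce
  Ce_mulA Ce_mulC Ce_mul1 Ce_mulDl Ce_one_neq0.

Definition Ce_emb (c : K) : Ce := (c, 0).
Definition Ce_e : Ce := (0, 1).
Definition Ce_bar (x : Ce) : Ce := (x.1, - x.2).
End Ce.

Definition C1 (R : realType) := Ce (R[i])%C.

Section J.
Variable R : realType.
Local Notation C := (R[i])%C.
Local Notation emb := (@Ce_emb C).
Local Notation e := (@Ce_e C).

Definition iC1 : C1 R := emb ('i%C : C).
Definition half : C1 R := emb (2^-1).

Definition Jmx (t : nat) : 'M[C1 R]_(t + t) :=
  block_mx ((half * (1 - iC1 * e))%:M) ((- (half * (iC1 - e)))%:M)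
           ((- (half * (iC1 - e)))%:M) ((half * (1 - iC1 * e))%:M).
Definition Jmx' (t : nat) : 'M[C1 R]_(t + t) :=
  block_mx ((half * (1 - iC1 * e))%:M) ((half * (iC1 - e))%:M)
           ((half * (iC1 - e))%:M) ((half * (1 - iC1 * e))%:M).

Definition mx_part0 m n (A : 'M[C1 R]_(m, n)) : 'M[C]_(m, n) := map_mx fst A.
Definition mx_part1 m n (A : 'M[C1 R]_(m, n)) : 'M[C]_(m, n) := map_mx snd A.
Definition mx_bar m n (A : 'M[C1 R]_(m, n)) : 'M[C1 R]_(m, n) :=
  map_mx (@Ce_bar C) A.
Definition mx_emb m n (B : 'M[C]_(m, n)) : 'M[C1 R]_(m, n) := map_mx emb B.
End J.

(* Main.v *)
Require Import Defs.
From HB Require Import structures.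
From mathcomp Require Import all_boot all_order all_algebra.
From mathcomp Require Import complex reals.
From mathcomp Require Import ring.
Import GRing.Theory Num.Theory.
Local Open Scope ring_scope.

Section G.
Variable T : comNzRingType.
Lemma gen1 t (u v : T) : u*u - v*v = 1 -> u*v = 0 ->
  block_mx u%:M (-v)%:M (-v)%:M u%:M *m block_mx u%:M v%:M v%:M u%:M = 1%:M :> 'M_(t+t) /\
  block_mx u%:M v%:M v%:M u%:M *m block_mx u%:M (-v)%:M (-v)%:M u%:M = 1%:M :> 'M_(t+t).
Proof.
move=> h1 h2.
rewrite !mulmx_block !mul_scalar_mx !scale_scalar_mx scalar_mx_block.
split; congr block_mx; apply/matrixP => i j; rewrite !mxE -mulrnDl.
all: case: (i == j); rewrite ?mulr1n ?mulr0n //.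
all: first [by rewrite -[RHS]h1; ring | by rewrite -[RHS](subrr (u*v)); ring].
Qed.

Lemma gen2 m n (A B : 'M[T]_(m, n)) (u v : T) :
  block_mx u%:M (-v)%:M (-v)%:M u%:M *m block_mx A 0 0 B *m block_mx u%:M v%:M v%:M u%:M =
  block_mx (u*u *: A - v*v *: B) ((u*v) *: (A - B)) ((u*v) *: (B - A)) (u*u *: B - v*v *: A).
Proof.
rewrite !mulmx_block !mul_scalar_mx !mul_mx_scalar !scaler0 !addr0 !add0r.
congr block_mx; apply/matrixP => i j; rewrite !mxE; ring.
Qed.
Variables I E H : T.
Hypotheses (hI : I * I = -1) (hE : E * E = -1) (hH : H * 2 = 1).

Lemma L1 : (H * (1 - I * E)) * (H * (1 - I * E)) - (H * (I - E)) * (H * (I - E)) = 1.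
Proof.
have -> : (H * (1 - I * E)) * (H * (1 - I * E)) - (H * (I - E)) * (H * (I - E))
  = H * H * (1 + (I * I) * (E * E) - I * I - E * E) by ring.
rewrite hI hE.
have -> : H * H * (1 + (-1) * (-1) - (-1) - (-1)) = (H * 2) * (H * 2) :> T by ring.
by rewrite hH mulr1.
Qed.

Lemma L2 : (H * (1 - I * E)) * (H * (I - E)) = 0.
Proof.
have -> : (H * (1 - I * E)) * (H * (I - E)) = H * H * (I - E - (I * I) * E + I * (E * E)) by ring.
rewrite hI hE; ring.
Qed.

Lemma L3 x y : (H * (1 - I * E)) * (H * (1 - I * E)) * (x + y * E)
   - (H * (I - E)) * (H * (I - E)) * (x - y * E) = x + I * y.
Proof.
have -> : (H * (1 - I * E)) * (H * (1 - I * E)) * (x + y * E)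
   - (H * (I - E)) * (H * (I - E)) * (x - y * E) =
   H * H * ((1 - 2 * I * E + (I * I) * (E * E)) * (x + y * E)
            - ((I * I) - 2 * I * E + (E * E)) * (x - y * E)) by ring.
rewrite hI hE.
have -> : H * H * ((1 - 2 * I * E + (-1) * (-1)) * (x + y * E)
            - ((-1) - 2 * I * E + (-1)) * (x - y * E)) =
          H * H * (4 * x - 4 * I * y * (E * E)) by ring.
rewrite hE.
have -> : H * H * (4 * x - 4 * I * y * (-1)) = (H * 2) * (H * 2) * (x + I * y) by ring.
by rewrite hH !mul1r.
Qed.

Lemma L4 x y : (H * (1 - I * E)) * (H * (1 - I * E)) * (x - y * E)
   - (H * (I - E)) * (H * (I - E)) * (x + y * E) = x - I * y.
Proof.
have -> : (H * (1 - I * E)) * (H * (1 - I * E)) * (x - y * E)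
   - (H * (I - E)) * (H * (I - E)) * (x + y * E) =
   H * H * ((1 - 2 * I * E + (I * I) * (E * E)) * (x - y * E)
            - ((I * I) - 2 * I * E + (E * E)) * (x + y * E)) by ring.
rewrite hI hE.
have -> : H * H * ((1 - 2 * I * E + (-1) * (-1)) * (x - y * E)
            - ((-1) - 2 * I * E + (-1)) * (x + y * E)) =
          H * H * (4 * x + 4 * I * y * (E * E)) by ring.
rewrite hE.
have -> : H * H * (4 * x + 4 * I * y * (-1)) = (H * 2) * (H * 2) * (x - I * y) by ring.
by rewrite hH !mul1r.
Qed.
End G.

Lemma Ce_eqP (K : comNzRingType) (x y : Ce K) : x.1 = y.1 -> x.2 = y.2 -> x = y.
Proof. by case: x y => [a b] [c d] /= -> ->. Qed.

Section S.
Variable R : realType.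
Local Notation C := (R[i])%C.
Local Notation emb := (@Ce_emb C).
Local Notation e := (@Ce_e C).

Lemma hI : iC1 R * iC1 R = -1.
Proof. apply: Ce_eqP => /=; rewrite ?mulr0 ?mul0r ?subr0 ?addr0 ?oppr0 //. by rewrite -expr2 sqr_i. Qed.
Lemma hE : e * e = -1 :> C1 R.
Proof. apply: Ce_eqP => /=; rewrite ?mulr0 ?mul0r ?mulr1 ?sub0r ?addr0 ?oppr0 //. Qed.
Lemma hH : Defs.half R * 2 = 1.
Proof. apply: Ce_eqP => /=; rewrite ?mulr0 ?mul0r ?mulr1 ?subr0 ?addr0 ?oppr0 //.
- by rewrite -[1 + 1 : C]/(2%:R) mulVf // pnatr_eq0.
- by rewrite mulr0. Qed.
Lemma hdec (a : C1 R) : a = emb a.1 + emb a.2 * e.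
Proof. apply: Ce_eqP => /=; rewrite ?mulr0 ?mul0r ?mulr1 ?subr0 ?addr0 ?add0r //. Qed.
Lemma hbar (a : C1 R) : Ce_bar a = emb a.1 - emb a.2 * e.
Proof. apply: Ce_eqP => /=; rewrite ?mulr0 ?mul0r ?mulr1 ?subr0 ?addr0 ?add0r ?oppr0 ?sub0r //. Qed.
Lemma hP (a : C1 R) : emb (a.1 + 'i%C * a.2) = emb a.1 + iC1 R * emb a.2.
Proof. apply: Ce_eqP => /=; rewrite ?mulr0 ?mul0r ?mulr1 ?subr0 ?addr0 ?add0r ?oppr0 ?sub0r //. Qed.
Lemma hM (a : C1 R) : emb (a.1 - 'i%C * a.2) = emb a.1 - iC1 R * emb a.2.
Proof. apply: Ce_eqP => /=; rewrite ?mulr0 ?mul0r ?mulr1 ?subr0 ?addr0 ?add0r ?oppr0 ?sub0r //. Qed.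
End S.

Theorem theorem6 (R : realType) (m n : nat) (A : 'M[C1 R]_(m, n)) :
  (0 < m)%N -> (0 < n)%N ->
  (forall t : nat, (0 < t)%N ->
     Jmx R t *m Jmx' R t = 1%:M /\ Jmx' R t *m Jmx R t = 1%:M) /\
  Jmx R m *m block_mx A 0 0 (mx_bar A) *m Jmx' R n =
  block_mx (mx_emb (mx_part0 A + ('i%C : R[i]) *: mx_part1 A)) 0
           0 (mx_emb (mx_part0 A - ('i%C : R[i]) *: mx_part1 A)).
Proof.
move=> _ _.
have l1 := @L1 _ _ _ _ (hI R) (hE R) (hH R).
have l2 := @L2 _ _ _ (Defs.half R) (hI R) (hE R).
split.
  move=> t _; exact: gen1.
rewrite /Jmx /Jmx' gen2 l2 !scale0r.
congr block_mx; apply/matrixP => i j; rewrite !mxE.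
- move: (A i j) => a.
  rewrite hP hbar {1}[a]hdec.
  exact: (@L3 _ _ _ _ (hI R) (hE R) (hH R)).
- move: (A i j) => a.
  rewrite hM hbar {3}[a]hdec.
  exact: (@L4 _ _ _ _ (hI R) (hE R) (hH R)).
Qed.
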